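(* Let $g:\mathbb{N}\to\mathbb{N}$ be monotone, strictly inflationary ($g(x)>x$ for all $x$) and super-homogeneous ($g(xy)\ge g(x)\cdot y$ for all $x,y\ge1$), and let $n\in\mathbb{N}$. If $\mathcal{Q}_0\subsetneq\mathcal{Q}_1\subsetneq\dots\subsetneq\mathcal{Q}_\ell$ is a $(g,n)$-controlled chain of congruences on $\mathbb{N}^d$, then $\ell\le 1+g^{\omega^{4d}}(4dn)$.
   Context: A congruence on $\mathbb{N}^d$ is an equivalence relation $\mathcal{Q}\subseteq\mathbb{N}^d\times\mathbb{N}^d$ with $(\mathbf{a},\mathbf{b})\in\mathcal{Q}\Rightarrow(\mathbf{a}+\mathbf{c},\mathbf{b}+\mathbf{c})\in\mathcal{Q}$, viewed as a subset of $\mathbb{N}^{2d}$. A chain $S_0\subsetneq S_1\subsetneq\dots\subsetneq S_\ell$ of subsets of $\mathbb{N}^k$ is $(g,n)$-controlled if for each $i\in[0,\ell-1]$ there is $\mathbf{s}_i\in S_{i+1}\setminus S_i$ with $\|\mathbf{s}_i\|\le g^i(n)$ ($\|\cdot\|$ maximum norm, $g^i$ the $i$-fold iterate). Hardy hierarchy relative to $g$: $g^0(x)=x$, $g^{\alpha+1}(x)=g^\alpha(g(x))$, $g^\lambda(x)=g^{\lambda(x)}(x)$ for limit $\lambda\le\omega^\omega$, using the fundamental sequences $\omega^\omega(x)=\omega^{x+1}$ and $(\beta+\omega^{k+1})(x)=\beta+\omega^k\cdot(x+1)$ where $\beta+\omega^{k+1}$ is in Cantor normal form. *)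

(* Defs.v *)
From mathcomp Require Import all_boot.
Set Implicit Arguments. Unset Strict Implicit. Unset Printing Implicit Defensive.

Definition vec (d : nat) := {ffun 'I_d -> nat}.
Definition vadd d (a b : vec d) : vec d := [ffun i => a i + b i].
Definition vnorm d (a : vec d) : nat := \max_(i < d) a i.

(* A subset of N^d x N^d = N^{2d}; max norm of (a,b) in N^{2d}. *)
Definition rel2 (d : nat) := vec d -> vec d -> Prop.
Definition pnorm d (a b : vec d) : nat := maxn (vnorm a) (vnorm b).

Definition is_congruence d (Q : rel2 d) : Prop :=
  [/\ (forall a, Q a a),
      (forall a b, Q a b -> Q b a),
      (forall a b c, Q a b -> Q b c -> Q a c) &
      (forall a b c, Q a b -> Q (vadd a c) (vadd b c))].

Definition strict_chain d (Q : nat -> rel2 d) (l : nat) : Prop :=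
  forall i, i < l ->
    (forall a b, Q i a b -> Q i.+1 a b) /\ ~ (forall a b, Q i.+1 a b -> Q i a b).

Definition controlled d (g : nat -> nat) (n : nat) (Q : nat -> rel2 d) (l : nat) : Prop :=
  forall i, i < l ->
    exists a b, [/\ Q i.+1 a b, ~ Q i a b & pnorm a b <= iter i g n].

(* Ordinals below omega^omega in Cantor normal form:
   [:: e1; ...; em] (e1 >= ... >= em) denotes omega^e1 + ... + omega^em.
   hardy g alpha x y  <->  g^alpha(x) = y, following:
     g^0(x) = x,  g^(b+1)(x) = g^b(g(x)),
     g^(b + omega^(k+1))(x) = g^(b + omega^k * (x+1))(x). *)
Inductive hardy (g : nat -> nat) : seq nat -> nat -> nat -> Prop :=
| hardy_zero x : hardy g [::] x x
| hardy_succ b x y : hardy g b (g x) y -> hardy g (rcons b 0) x y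
| hardy_lim b k x y : hardy g (b ++ nseq x.+1 k) x y -> hardy g (rcons b k.+1) x y.

(* Main.v *)
Require Import Defs.
From mathcomp Require Import all_boot zify.
Set Implicit Arguments. Unset Strict Implicit. Unset Printing Implicit Defensive.


Definition mono (f : nat -> nat) := forall x y, x <= y -> f x <= f y.
Definition infl (f : nat -> nat) := forall x, x < f x.

Lemma iter_mono f n : mono f -> mono (iter n f).
Proof. move=> Hf; elim: n => [|n IH] x y Hxy //=; exact/Hf/IH. Qed.

Lemma iter_infl_le f n x : infl f -> x <= iter n f x.
Proof. move=> Hf; elim: n => [|n IH] //=; exact: leq_trans IH (ltnW (Hf _)). Qed.

Lemma iter_add_le f n x : infl f -> x + n <= iter n f x.
Proof. move=> Hf; elim: n => [|n IH] /=; first by rewrite addn0.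
by rewrite addnS; apply: leq_trans (Hf _); rewrite ltnS. Qed.

Lemma iter_le_count f m n x : infl f -> m <= n -> iter m f x <= iter n f x.
Proof. move=> Hf /subnK <-; rewrite iterD; exact: iter_infl_le. Qed.

Lemma iter_le_fun f h n : mono h -> (forall x, f x <= h x) -> forall x, iter n f x <= iter n h x.
Proof. move=> Hh Hfh; elim: n => [|n IH] x //=; apply: leq_trans (Hfh _) _; exact/Hh/IH. Qed.

Lemma iter_le_fun_above f h n y : mono h -> infl f ->
  (forall x, y <= x -> f x <= h x) -> forall x, y <= x -> iter n f x <= iter n h x.
Proof. move=> Hh Hf Hfh; elim: n => [|n IH] x Hx //=.
apply: leq_trans (Hfh _ _) _; first exact: leq_trans Hx (iter_infl_le _ _ Hf).
exact/Hh/IH. Qed.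

Fixpoint H (g : nat -> nat) (k : nat) : nat -> nat :=
  if k is k'.+1 then fun x => iter x.+1 (H g k') x else g.

Lemma H_props g k : mono g -> infl g -> mono (H g k) /\ infl (H g k) /\ (forall x, g x <= H g k x).
Proof. move=> Hm Hi; elim: k => [|k [IHm [IHi IHg]]] //=.
split; [|split].
- move=> x y Hxy /=; apply: leq_trans (iter_mono x.+1 IHm Hxy) _; exact: (iter_le_count y IHi (Hxy : x.+1 <= y.+1)).
- move=> x; apply: leq_trans (IHi x) _; exact: (iter_le_count _ IHi (isT : 1 <= x.+1)).
- move=> x; apply: leq_trans (IHg x) _; exact: (iter_le_count _ IHi (isT : 1 <= x.+1)).
Qed.

Lemma H_level g k m x : mono g -> infl g -> k <= m -> H g k x <= H g m x.
Proof. move=> Hm Hi /subnK <-; elim: (m - k) => [|j IH] //=.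
apply: leq_trans IH _. have [_ [Hi' _]] := H_props (j + k) Hm Hi.
exact: (iter_le_count _ Hi' (isT : 1 <= x.+1)). Qed.

Lemma hardy_cat g s x z b y : hardy g s x z -> hardy g b z y -> hardy g (b ++ s) x y.
Proof.
move=> H1; elim: H1 b y => {s x z} [x|s x z _ IH|s k x z _ IH] b y H2.
- by rewrite cats0.
- rewrite -rcons_cat; apply: hardy_succ; exact: IH.
- rewrite -rcons_cat; apply: hardy_lim; rewrite -catA; exact: IH.
Qed.

Lemma nseqS_rcons c (k : nat) : nseq c.+1 k = rcons (nseq c k) k.
Proof. by elim: c => //= c ->. Qed.

Lemma hardy_nseq g k : forall c x, hardy g (nseq c k) x (iter c (H g k) x).
Proof.
elim: k => [|k IHk] c; elim: c => [|c IHc] x; try exact: hardy_zero.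
- rewrite nseqS_rcons iterSr; apply: hardy_succ; exact: IHc.
- rewrite nseqS_rcons iterSr; apply: hardy_lim.
  apply: hardy_cat (IHk _ _) _; exact: IHc.
Qed.


Definition pick (tag : nat -> nat) i := ~~ has (fun j => tag j == tag i) (iota 0 i).
Definition cnt tag a := count (pick tag) (iota 0 a).

Lemma iotaS0 a : iota 0 a.+1 = iota 0 a ++ [:: a].
Proof. by rewrite -addn1 iotaD. Qed.

Lemma cnt_le tag s a : (forall i, i < a -> tag i < s) -> cnt tag a <= s.
Proof.
move=> Ht.
have U : uniq (map tag (filter (pick tag) (iota 0 a))).
  elim: a Ht => [|a IH] Ht; first by [].
  rewrite iotaS0 filter_cat map_cat cat_uniq IH; last by move=> i Hi; apply: Ht; lia.
  rewrite /=; case Pa: (pick tag a) => //=; rewrite andbT orbF.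
  apply/mapP => -[j]; rewrite mem_filter mem_iota => /andP [_ Hj] E.
  move/negP: Pa; apply; apply/hasP; exists j; rewrite ?mem_iota //; by rewrite E.
rewrite /cnt -size_filter -(size_map tag) -(size_iota 0 s).
apply: uniq_leq_size U _ => t /mapP [j]; rewrite mem_filter mem_iota => /andP [_ Hj] ->.
rewrite mem_iota /=; apply: Ht; lia.
Qed.

Lemma count_none (p : pred nat) a n : (forall i, a <= i -> i < a + n -> ~~ p i) -> count p (iota a n) = 0.
Proof.
move=> Hp; apply/eqP; rewrite eqn0Ngt -has_count; apply/hasPn => i; rewrite mem_iota.
move=> /andP [H1 H2]; exact: Hp.
Qed.

Lemma step g tag L s x (Phi : nat -> nat) : mono g -> infl g -> mono Phi -> (forall u, u <= Phi u) ->
  (forall i, i < L -> tag i < s) ->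
  (forall a b, a <= b -> b <= L -> (forall i, a <= i -> i < b -> ~~ pick tag i) -> iter b g x <= Phi (iter a g x)) ->
  iter L g x <= iter s (fun u => Phi (g u)) (Phi x).
Proof.
move=> Hgm Hgi HPm HPi Ht Hph.
set rho := fun u => Phi (g u).
have Hrm : mono rho by move=> u w Huw; apply/HPm/Hgm.
have Hri : infl rho by move=> u; apply: leq_trans (Hgi u) (HPi _).
suff: forall r a, a <= L -> s <= cnt tag a + r -> iter L g x <= iter r rho (Phi (iter a g x)) by move/(_ s 0 (leq0n _)); apply.
elim=> [|r IH] a HaL Hs.
-
  have Hnp : forall i, a <= i -> i < L -> ~~ pick tag i.
    move=> i Hai HiL; apply/negP => Pi.
    have : cnt tag i.+1 <= s by apply: cnt_le => j Hj; apply: Ht; lia.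
    have -> : i.+1 = a + (i.+1 - a) by lia.
    rewrite /cnt iotaD count_cat.
    have : 0 < count (pick tag) (iota (0 + a) (i.+1 - a)).
      rewrite -has_count; apply/hasP; exists i => //; rewrite mem_iota; lia.
    rewrite addn0 in Hs; rewrite /cnt in Hs; lia.
  exact: Hph.
- case: (boolP (has (pick tag) (iota a (L - a)))) => Hh; last first.
    apply: leq_trans (Hph a L HaL (leqnn _) _) (iter_infl_le _ _ Hri).
    move=> i H1 H2; move/hasPn: Hh; apply; rewrite mem_iota; lia.
  have Hex : exists b, (a <= b) && (b < L) && pick tag b.
    move/hasP: Hh => [b]; rewrite mem_iota => /andP [H1 H2] Pb; exists b; rewrite Pb andbT; apply/andP; split=> //; lia.
  case: (ex_minnP Hex) => b /andP [/andP [Hab HbL] Pb] Hmin.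
  have Hnp : forall i, a <= i -> i < b -> ~~ pick tag i.
    move=> i H1 H2; apply/negP => Pi; have := Hmin i; rewrite H1 Pi andbT /=.
    have -> : i < L by lia. move=> /(_ isT); lia.
  have Hcb : cnt tag b.+1 = (cnt tag a).+1.
    rewrite /cnt iotaS0 count_cat /= Pb.
    have -> : b = a + (b - a) by lia.
    rewrite iotaD count_cat (@count_none (pick tag) (0 + a) (b - a)); first by rewrite /cnt addn0 addn1.
    move=> i H1 H2; apply: Hnp; lia.
  have Hb := Hph a b Hab (ltnW HbL) Hnp.
  apply: leq_trans (IH b.+1 HbL _) _; first by rewrite Hcb; lia.
  rewrite [X in _ <= X]iterSr; apply: (iter_mono r Hrm); rewrite /rho; apply/HPm/Hgm; exact: Hb.
Qed.


Definition bad K L (tag : nat -> nat) (v : nat -> nat -> nat) :=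
  forall i i', i < i' -> i' < L -> tag i = tag i' -> ~~ all (fun c => v i c <= v i' c) (iota 0 K).

Definition Pbound g K (G : nat -> nat) := forall y x s L tag v,
  2 <= y -> K <= y -> 0 < x -> x <= y -> s <= y ->
  (forall i, i < L -> tag i < s) ->
  (forall i c, i < L -> c < K -> v i c <= iter i g x) ->
  bad K L tag v -> iter L g x <= G y.

Lemma decode t j w t' j' w' K B : j < K -> j' < K -> w < B -> w' < B ->
  (t * K + j) * B + w = (t' * K + j') * B + w' -> [/\ t = t', j = j' & w = w'].
Proof.
move=> HjK Hj'K HwB Hw'B E.
have Ew : w = w'.
  have := congr1 (modn^~ B) E; rewrite /= modnMDl modnMDl !modn_small //.
subst w'; move/addIn: E => /eqP; rewrite eqn_pmul2r; last by lia.
move=> /eqP E.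
have Ej : j = j'.
  have := congr1 (modn^~ K) E; rewrite /= modnMDl modnMDl !modn_small //.
subst j'; move/addIn: E => /eqP; rewrite eqn_pmul2r; last by lia.
by move/eqP.
Qed.

Definition focc (tag : nat -> nat) i := find (fun j => tag j == tag i) (iota 0 i).

Lemma first_occ (tag : nat -> nat) i : ~~ pick tag i ->
  [/\ focc tag i < i, tag (focc tag i) = tag i & pick tag (focc tag i)].
Proof.
move=> Hh0; have Hh : has (fun j => tag j == tag i) (iota 0 i) by move: Hh0; rewrite /pick negbK.
rewrite /pick; set p := focc tag i.
have Hp : p < i by rewrite /p -[X in _ < X](size_iota 0 i) -has_find.
have Tp : tag p = tag i.
  by have := nth_find 0 Hh; rewrite nth_iota // add0n => /eqP.
split=> //; apply/hasPn => j; rewrite mem_iota add0n => /andP [_ Hj].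
have := before_find 0 Hj; rewrite nth_iota ?add0n; last by lia.
by rewrite Tp => ->.
Qed.

Lemma phase g K' G y x s L tag v : mono g -> infl g -> Pbound g K' G ->
  2 <= y -> K'.+1 <= y -> 0 < x -> s <= y ->
  (forall i, i < L -> tag i < s) ->
  (forall i c, i < L -> c < K'.+1 -> v i c <= iter i g x) ->
  bad K'.+1 L tag v ->
  forall a b, a <= b -> b <= L -> (forall i, a <= i -> i < b -> ~~ pick tag i) ->
  iter b g x <= G ((y * K'.+1 + 1) * iter a g x).
Proof.
move=> Hgm Hgi HP Hy2 HyK Hx Hsy Ht Hc Hbad a b Hab HbL Hnp.
set K := K'.+1. set B := iter a g x.
have HB : 0 < B by apply: leq_trans Hx (iter_infl_le _ _ Hgi).
pose p i := focc tag i.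
pose jj i := find (fun c => v i c < v (p i) c) (iota 0 K).
have F : forall i, a <= i -> i < b ->
   [/\ tag (p i) = tag i, jj i < K, v i (jj i) < B &
       forall c, c < K -> v (p i) c <= B].
  move=> i H1 H2.
  have [Hpi Tp Pp] := first_occ (Hnp i H1 H2).
  have Hpa : p i < a.
    rewrite ltnNge; apply/negP => H3; move: (Hnp _ H3 (ltn_trans Hpi H2)); by rewrite Pp.
  have Hvp : forall c, c < K -> v (p i) c <= B.
    move=> c Hc'; apply: leq_trans (Hc _ _ _ Hc') _; first by lia.
    exact: iter_le_count (ltnW Hpa).
  have Hh : has (fun c => v i c < v (p i) c) (iota 0 K).
    have := Hbad _ _ Hpi (leq_trans H2 HbL) Tp; rewrite -has_predC.
    by apply: sub_has => c /=; rewrite ltnNge.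
  have Hj : jj i < K by rewrite /jj -[X in _ < X](size_iota 0 K) -has_find.
  have Hv := nth_find 0 Hh; rewrite nth_iota // add0n in Hv.
  split=> //; apply: leq_trans Hv (Hvp _ Hj).
pose tag' i' := (tag (a + i') * K + jj (a + i')) * B + v (a + i') (jj (a + i')).
pose v' i' c := if c < jj (a + i') then v (a + i') c else v (a + i') c.+1.
have -> : iter b g x = iter (b - a) g B by rewrite /B -iterD subnK.
have HK : K = K'.+1 by [].
have HBd : B = iter a g x by [].
clearbody K B.
apply: (HP _ _ (y * K * B) (b - a) tag' v') => //.
- have H3 : 3 <= y * K + 1 by rewrite HK; nia.
  apply: leq_trans (leq_pmulr _ HB); lia.
- have H3 : K' <= y * K + 1 by rewrite HK; nia.
  apply: leq_trans (leq_pmulr _ HB); lia.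
- by apply: leq_pmull; rewrite addn1.
- by rewrite leq_mul2r addn1 leqnSn orbT.
- move=> i' Hi'; have [_ Hj Hw _] := F (a + i') (leq_addr _ _) (ltac:(lia)).
  have Hts := Ht (a + i') ltac:(lia).
  rewrite /tag'.
  set t := tag (a + i') in Hts *; set j := jj (a + i') in Hj *; set w := v (a + i') j in Hw *.
  have H1 : (t * K + j) * B + w < (t * K + j).+1 * B by nia.
  have H2 : (t * K + j).+1 <= y * K by nia.
  apply: leq_trans H1 _; by rewrite leq_mul2r H2 orbT.
- move=> i' c Hi' HcK; rewrite /v' HBd -iterD.
  have [_ Hj _ _] := F (a + i') (leq_addr _ _) (ltac:(lia)).
  case: ifP => _; rewrite addnC; apply: Hc; lia.
- move=> i1 i2 H12 H2L Etag.
  have [T1 J1 W1 _] := F (a + i1) (leq_addr _ _) (ltac:(lia)).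
  have [T2 J2 W2 _] := F (a + i2) (leq_addr _ _) (ltac:(lia)).
  have [Et Ej Ew] := decode J1 J2 W1 W2 Etag.
  apply/negP => /allP Hall.
  have := Hbad (a + i1) (a + i2) ltac:(lia) ltac:(lia) Et.
  move/negP; apply; apply/allP => c; rewrite mem_iota add0n => /andP [_ HcK].
  case: (ltngtP c (jj (a + i1))) => Hcj.
  + have := Hall c; rewrite mem_iota add0n /v' -Ej Hcj; apply; lia.
  + destruct c as [|c']; first by [].
    have := Hall c'; rewrite mem_iota add0n /v' -Ej.
    have -> : (c' < jj (a + i1)) = false by apply/negbTE; rewrite -leqNgt; lia.
    apply; apply/andP; split=> //; lia.
  + by rewrite Hcj Ew Ej.
Qed.


Definition suphom (g : nat -> nat) := forall x y, 1 <= x -> 1 <= y -> g x * y <= g (x * y).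

Lemma g_double g z : infl g -> suphom g -> 1 <= z -> 2 * z <= g z.
Proof. move=> Hi Hs Hz; have := Hs 1 z (leqnn _) Hz; rewrite mul1n.
have := Hi 1; nia. Qed.

Lemma iter_pow g n u : infl g -> suphom g -> 1 <= u -> 2 ^ n * u <= iter n g u.
Proof. move=> Hi Hs Hu; elim: n => [|n IH] /=; first by rewrite mul1n.
have H1 : 1 <= iter n g u by apply: leq_trans Hu (iter_infl_le _ _ Hi).
apply: leq_trans (g_double Hi Hs H1); rewrite expnS -mulnA leq_mul2l IH orbT //. Qed.

Lemma sq_pow u : u * u + 1 <= 2 ^ u.+1.
Proof.
elim: u => [|u IH] //; case: u IH => [|u] IH //; case: u IH => [|u] IH //.
rewrite expnS; nia.
Qed.

Lemma Pbound0 g : mono g -> infl g -> Pbound g 0 (H g 1).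
Proof.
move=> Hgm Hgi y x s L tag v Hy2 _ Hx Hxy Hsy Ht Hc Hbad.
have := @step g tag L s x id Hgm Hgi (fun u w h => h) (fun u => leqnn u) Ht.
have Hph : forall a b, a <= b -> b <= L -> (forall i, a <= i -> i < b -> ~~ pick tag i) -> iter b g x <= iter a g x.
  move=> a b Hab HbL Hnp; case: (ltngtP a b) => Hab'; last by rewrite Hab'.
  - have [Hp Tp _] := first_occ (Hnp a (leqnn _) Hab').
    by have := Hbad _ _ Hp (leq_trans Hab' HbL) Tp.
  - lia.
move=> /(_ Hph) H1; apply: leq_trans H1 _ => /=.
change (iter s g x <= iter y.+1 g y).
apply: leq_trans (iter_mono s Hgm Hxy) _; apply: iter_le_count => //; lia.
Qed.

Lemma PboundS g K' : mono g -> infl g -> suphom g ->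
  Pbound g K' (H g (2 * K' + 1)) -> Pbound g K'.+1 (H g (2 * K'.+1 + 1)).
Proof.
move=> Hgm Hgi Hgs IH y x s L tag v Hy2 HyK Hx Hxy Hsy Ht Hc Hbad.
set m := 2 * K' + 1.
have [Hm [Hi Hg]] := H_props m Hgm Hgi.
set Phi := fun u => H g m ((y * K'.+1 + 1) * u).
have HPm : mono Phi by move=> u w h; apply: Hm; rewrite leq_mul2l h orbT.
have HPi : forall u, u <= Phi u.
  move=> u; apply: leq_trans (ltnW (Hi _)); by apply: leq_pmull; rewrite addn1.
have St := step Hgm Hgi HPm HPi Ht (phase Hgm Hgi IH Hy2 HyK Hx Hsy Ht Hc Hbad).
set rho := fun u => Phi (g u) in St.
have Hrm : mono rho by move=> u w h; apply/HPm/Hgm.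
have Hri : infl rho by move=> u; apply: leq_trans (Hgi u) (HPi _).
have Key : forall u, y <= u -> rho u <= H g m.+1 u.
  move=> u Hyu.
  have Hu1 : 1 <= u by lia.
  have A : (y * K'.+1 + 1) * g u <= g (u * (y * K'.+1 + 1)).
    rewrite mulnC; apply: Hgs => //; lia.
  have B : u * (y * K'.+1 + 1) <= H g 1 u.
    have := iter_pow u.+1 Hgi Hgs Hu1; have := sq_pow u.
    change (H g 1 u) with (iter u.+1 g u).
    have : y * K'.+1 <= u * u by nia.
    nia.
  have C : g (H g 1 u) <= H g m (H g m u).
    apply: leq_trans (Hg _) _; apply: Hm; apply: H_level => //; lia.
  rewrite /rho /Phi; apply: leq_trans (Hm _ _ A) _.
  apply: leq_trans (Hm _ _ (Hgm _ _ B)) _.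
  apply: leq_trans (Hm _ _ C) _.
  change (iter 3 (H g m) u <= iter u.+1 (H g m) u).
  apply: iter_le_count => //; lia.
have -> : 2 * K'.+1 + 1 = m.+2 by rewrite /m; lia.
apply: leq_trans St _.
apply: leq_trans (iter_mono s Hrm (HPm _ _ (ltnW (Hgi x)))) _.
change (iter s rho (rho x) <= H g m.+2 y); rewrite -iterSr.
apply: leq_trans (iter_mono s.+1 Hrm Hxy) _.
apply: leq_trans (iter_le_count y Hri (_ : s.+1 <= y.+1)) _; first by lia.
change (iter y.+1 rho y <= iter y.+1 (H g m.+1) y).
have [Hm1 _] := H_props m.+1 Hgm Hgi.
exact: (@iter_le_fun_above rho (H g m.+1) y.+1 y Hm1 Hri Key y (leqnn y)).
Qed.

Lemma Pbound_all g K : mono g -> infl g -> suphom g -> Pbound g K (H g (2 * K + 1)).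
Proof.
move=> Hgm Hgi Hgs; elim: K => [|K IH]; first exact: Pbound0.
exact: PboundS.
Qed.

From Stdlib Require Import Classical IndefiniteDescription.

Fixpoint ltl k (u v : nat -> nat) : bool :=
  if k is k'.+1 then (u 0 < v 0) || ((u 0 == v 0) && ltl k' (fun i => u i.+1) (fun i => v i.+1))
  else false.

Lemma ltl_ext k u u' v v' : (forall i, u i = u' i) -> (forall i, v i = v' i) -> ltl k u v = ltl k u' v'.
Proof.
elim: k u u' v v' => [|k IH] u u' v v' Hu Hv //=.
rewrite Hu Hv (IH _ (fun i => u' i.+1) _ (fun i => v' i.+1)) //.
Qed.

Lemma ltl_add k u v w : ltl k u v -> ltl k (fun i => u i + w i) (fun i => v i + w i).
Proof.
elim: k u v w => [|k IH] u v w //=.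
rewrite ltn_add2r eqn_add2r => /orP [->//|/andP [-> H]].
by rewrite (IH _ _ (fun i => w i.+1) H) orbT.
Qed.

Lemma ltl_total k u v : (forall i, i < k -> u i = v i) \/ ltl k u v \/ ltl k v u.
Proof.
elim: k u v => [|k IH] u v; first by left.
case: (ltngtP (u 0) (v 0)) => H0.
- by right; left; rewrite /= H0.
- by right; right; rewrite /= H0.
have [Hs|[Hs|Hs]] := IH (fun i => u i.+1) (fun i => v i.+1).
- by left => -[|i] Hi //; apply: Hs.
- by right; left; rewrite /= H0 eqxx Hs orbT.
- by right; right; rewrite /= H0 eqxx Hs orbT.
Qed.

Lemma nat_min (P : nat -> Prop) : (exists n, P n) -> exists n, P n /\ forall m, P m -> n <= m.
Proof.
move=> [n Pn]; apply: NNPP => Hno.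
have Hall : forall N m, m < N -> ~ P m.
  elim=> [|N IH] m Hm //; case: (ltngtP m N) => Hm'.
  - exact: IH.
  - lia.
  - subst m => PN; apply: Hno; exists N; split=> // k Pk.
    rewrite leqNgt; apply/negP => Hk; exact: IH Hk Pk.
exact: Hall n.+1 n (ltnSn _) Pn.
Qed.

Lemma ltl_min k (P : (nat -> nat) -> Prop) : (exists u, P u) ->
  exists u, P u /\ forall w, P w -> ~~ ltl k w u.
Proof.
elim: k P => [|k IH] P [u Pu]; first by exists u.
have [m0 [[u0 [Pu0 E0]] Hm0]] := @nat_min (fun n => exists u, P u /\ u 0 = n) (ex_intro _ (u 0) (ex_intro _ u (conj Pu erefl))).
have [w0 [[u1 [Pu1 [E1 S1]]] Hw0]] := IH (fun w => exists u, P u /\ u 0 = m0 /\ forall i, u i.+1 = w i)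
   (ex_intro _ (fun i => u0 i.+1) (ex_intro _ u0 (conj Pu0 (conj E0 (fun i => erefl))))).
exists u1; split=> // w Pw /=.
rewrite E1 negb_or; apply/andP; split.
- rewrite -leqNgt; apply: Hm0; by exists w.
- apply/negP => /andP [/eqP Ew H].
  have := Hw0 (fun i => w i.+1) (ex_intro _ w (conj Pw (conj Ew (fun i => erefl)))).
  by rewrite (ltl_ext _ (fun i => erefl) S1) in H; rewrite H.
Qed.

Definition key d (m : vec d) : nat -> nat := fun c =>
  if c is c'.+1 then (match (insub c' : option 'I_d) with Some i => m i | None => 0 end)
  else \sum_(j < d) m j.

Lemma key_add d (a c : vec d) i : key (vadd a c) i = key a i + key c i.
Proof.
case: i => [|i] /=.
- by rewrite -big_split /=; apply: eq_bigr => j _; rewrite ffunE.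
- by case: (insub i) => [o|] //; rewrite ffunE.
Qed.

Lemma key_val d (m : vec d) (o : 'I_d) : key m (val o).+1 = m o.
Proof. by rewrite /= valK. Qed.

Lemma key_inj d (a b : vec d) : (forall i, key a i = key b i) -> a = b.
Proof. move=> H; apply/ffunP => o; by rewrite -!key_val H. Qed.

Lemma coord_le_key d (m : vec d) o : m o <= key m 0.
Proof. by rewrite /= (bigD1 o) //= leq_addr. Qed.

Lemma key_le_norm d (m : vec d) : key m 0 <= d * vnorm m.
Proof.
apply: (@leq_trans (\sum_(j < d) vnorm m)).
  by apply: leq_sum => o _; exact: leq_bigmax.
by rewrite sum_nat_const card_ord.
Qed.

Lemma rep_exists d (Q : rel2 d) x : is_congruence Q -> exists s,
  Q s x /\ forall z, Q z x -> ~~ ltl d.+1 (key z) (key s).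
Proof.
move=> [Hr Hs Ht Ha].
have [u [[s [Qs Es]] Hu]] := @ltl_min d.+1 (fun u => exists z, Q z x /\ u = key z) (ex_intro _ (key x) (ex_intro _ x (conj (Hr x) erefl))).
exists s; split=> // z Qz; rewrite -Es; apply: Hu; by exists z.
Qed.

Lemma helper d (Q Q' : rel2 d) a b sa sb N :
  is_congruence Q -> is_congruence Q' -> (forall x y, Q x y -> Q' x y) ->
  Q' a b -> vnorm a <= N ->
  Q sa a -> (forall z, Q z a -> ~~ ltl d.+1 (key z) (key sa)) ->
  Q sb b -> ltl d.+1 (key sb) (key sa) ->
  exists m : vec d, [/\ (exists z, ltl d.+1 (key z) (key m) /\ Q' m z),
      (forall z, Q z m -> ~~ ltl d.+1 (key z) (key m)) & forall o, m o <= d * N].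
Proof.
move=> [Hr Hs Ht Ha] [Hr' Hs' Ht' Ha'] Hinc Qab HN Qa Ma Qb Lba.
exists sa; split.
- exists sb; split=> //; apply: (Ht' _ a); first exact: Hinc.
  apply: (Ht' _ b) => //; apply: Hinc; exact: Hs.
- move=> z Qz; apply: Ma; exact: Ht Qz Qa.
- move=> o; apply: leq_trans (coord_le_key _ o) _.
  have : ~~ ltl d.+1 (key a) (key sa) by apply: Ma; apply: Hr.
  rewrite /= negb_or -leqNgt => /andP [H _].
  apply: leq_trans H _; apply: leq_trans (key_le_norm a) _; by rewrite leq_mul2l HN orbT.
Qed.

Lemma get_m d (Q Q' : rel2 d) a b N : is_congruence Q -> is_congruence Q' ->
  (forall x y, Q x y -> Q' x y) -> Q' a b -> ~ Q a b -> pnorm a b <= N ->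
  exists m : vec d, [/\ (exists z, ltl d.+1 (key z) (key m) /\ Q' m z),
      (forall z, Q z m -> ~~ ltl d.+1 (key z) (key m)) & forall o, m o <= d * N].
Proof.
move=> HQ HQ' Hinc Qab nQab HN.
have [sa [Qa Ma]] := rep_exists a HQ.
have [sb [Qb Mb]] := rep_exists b HQ.
have HQ0 := HQ; have HQ'0 := HQ'.
case: HQ0 => [Hr Hs Ht Ha]; case: HQ'0 => [Hr' Hs' Ht' Ha'].
have [E|[L|L]] := ltl_total d.+1 (key sa) (key sb).
- exfalso; apply: nQab.
  have Eab : sa = sb.
    apply: key_inj => i; case: (ltnP i d.+1) => Hi; first exact: E.
    case: i Hi => [//|c] Hc /=; case: insubP => [o _ Ho|//].
    have := ltn_ord o; rewrite Ho; lia.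
  apply: (Ht _ sa); first exact: Hs.
  by rewrite Eab.
- apply: (helper HQ HQ' Hinc (Hs' _ _ Qab) _ Qb Mb Qa L).
  apply: leq_trans _ HN; exact: leq_maxr.
- apply: (helper HQ HQ' Hinc Qab _ Qa Ma Qb L).
  apply: leq_trans _ HN; exact: leq_maxl.
Qed.

From Stdlib Require Import Classical IndefiniteDescription.

Lemma iter_scale g d n i : mono g -> infl g -> suphom g -> 1 <= d -> 1 <= n ->
  d * iter i g n <= iter i g (d * n).
Proof.
move=> Hm Hi Hs Hd Hn; elim: i => [|i IH] //=.
have H1 : 1 <= iter i g n by apply: leq_trans Hn (iter_infl_le _ _ Hi).
rewrite mulnC; apply: leq_trans (Hs _ _ H1 Hd) _; apply: Hm; rewrite mulnC; exact: IH.
Qed.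

Theorem lemma15 (g : nat -> nat)
  (g_mono : forall x y, x <= y -> g x <= g y)
  (g_infl : forall x, x < g x)
  (g_suphom : forall x y, 1 <= x -> 1 <= y -> g x * y <= g (x * y))
  (n d : nat) (Q : nat -> rel2 d) (l : nat)
  (Qcong : forall i, i <= l -> is_congruence (Q i))
  (Qchain : strict_chain Q l)
  (Qctrl : controlled g n Q l) :
  exists h, hardy g [:: 4 * d] (4 * d * n) h /\ l <= 1 + h.
Proof.
have Hgm : mono g by [].
have Hgi : infl g by [].
have Hgs : suphom g by [].
exists (H g (4 * d) (4 * d * n)); split; first exact: (hardy_nseq g (4 * d) 1 (4 * d * n)).
case: (posnP l) => [->//|Hl].
have [Hd Hn] : 1 <= d /\ 1 <= n.
  have [a [b [_ nQ Hab]]] := Qctrl 0 Hl.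
  have [Hr _ _ _] := Qcong 0 (leq0n _).
  suff : 1 <= d /\ 1 <= n \/ a = b by case=> // Eab; exfalso; apply: nQ; rewrite Eab; exact: Hr.
  case: (posnP d) => Hd; case: (posnP n) => Hn; try by left.
  + right; apply/ffunP => o; have := ltn_ord o; rewrite {2}Hd //.
  + right; apply/ffunP => o; have := ltn_ord o; rewrite {2}Hd //.
  + right; apply/ffunP => o.
    have Hab0 : maxn (vnorm a) (vnorm b) <= 0 by move: Hab; rewrite /pnorm /= Hn.
    have Ha : a o <= 0 := leq_trans (leq_bigmax (F:=a) o) (leq_trans (leq_maxl _ _) Hab0).
    have Hb : b o <= 0 := leq_trans (leq_bigmax (F:=b) o) (leq_trans (leq_maxr _ _) Hab0).
    by move: Ha Hb; rewrite !leqn0 => /eqP -> /eqP ->.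
have Hincl : forall j i x y, j <= i -> i <= l -> Q j x y -> Q i x y.
  move=> j i x y Hji Hil; elim: i Hji Hil => [|i IH] Hji Hil.
  - by rewrite leqn0 in Hji; move/eqP: Hji => ->.
  - case: (ltngtP j i.+1) => Hj; last by rewrite Hj.
    + move=> Qj; have [Hc _] := Qchain i Hil; apply: Hc; apply: IH => //; lia.
    + lia.
have Hm : forall i, exists m : vec d, i < l -> [/\ (exists z, ltl d.+1 (key z) (key m) /\ Q i.+1 m z),
      (forall z, Q i z m -> ~~ ltl d.+1 (key z) (key m)) & forall o, m o <= d * iter i g n].
  move=> i; case: (ltnP i l) => Hi; last by exists [ffun=> 0].
  have [a [b [Qab nQab Hab]]] := Qctrl i Hi.
  have [m Hm] := get_m (Qcong i (ltnW Hi)) (Qcong i.+1 Hi) (fun x y => Hincl i i.+1 x y (leqnSn _) Hi) Qab nQab Hab.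
  by exists m.
pose mm i := proj1_sig (constructive_indefinite_description _ (Hm i)).
have Hmm : forall i, i < l -> [/\ (exists z, ltl d.+1 (key z) (key (mm i)) /\ Q i.+1 (mm i) z),
      (forall z, Q i z (mm i) -> ~~ ltl d.+1 (key z) (key (mm i))) & forall o, mm i o <= d * iter i g n]
  := fun i => proj2_sig (constructive_indefinite_description _ (Hm i)).
clearbody mm.
have Main := @Pbound_all g d Hgm Hgi Hgs (d * n + 2) (d * n) 1 l (fun _ => 0) (fun i c => key (mm i) c.+1).
have Hbound : iter l g (d * n) <= H g (2 * d + 1) (d * n + 2).
  apply: Main; [nia|nia|lia|lia|lia|by []| |].
  - move=> i c Hi Hc /=; case: insubP => [o _ Ho|//].
    have [_ _ Hb] := Hmm i Hi; apply: leq_trans (Hb o) _; exact: iter_scale.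
  - move=> i i' Hii' Hi'l _; apply/negP => /allP Hall.
    have Hle : forall o : 'I_d, mm i o <= mm i' o.
      move=> o; have := Hall (val o); rewrite mem_iota /= !valK; apply; rewrite ltn_ord; lia.
    pose cv : vec d := [ffun o => mm i' o - mm i o].
    have Ecv : vadd (mm i) cv = mm i'.
      by apply/ffunP => o; rewrite !ffunE subnKC // Hle.
    have [[z [Lz Qz]] _ _] := Hmm i (ltn_trans Hii' Hi'l).
    have [_ Min _] := Hmm i' Hi'l.
    have [_ Hs _ Ha] := Qcong i' (ltnW Hi'l).
    have Qz' : Q i' (mm i) z by apply: (Hincl i.+1) => //; lia.
    have := Min (vadd z cv); rewrite -{1 2}Ecv; move/(_ (Hs _ _ (Ha _ _ cv Qz'))) => /negP; apply.
    rewrite (ltl_ext _ (fun j => key_add z cv j) (fun j => key_add (mm i) cv j)).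
    exact: ltl_add.
have Hl1 : l <= iter l g (d * n) by apply: leq_trans (iter_add_le _ _ Hgi); rewrite leq_addl.
have [HHm _] := H_props (2 * d + 1) Hgm Hgi.
apply: leq_trans (leq_addl 1 _); apply: leq_trans Hl1 _; apply: leq_trans Hbound _.
apply: leq_trans (HHm _ _ (_ : d * n + 2 <= 4 * d * n)) _; first nia.
apply: H_level => //; lia.
Qed.
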